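(* Let $\Gamma$ be any art gallery (not necessarily normal). If a configuration consisting of one or two guards visually covers the walls of $\Gamma$, then this configuration visually covers all of $\Gamma$.
   Context: An art gallery $\Gamma$ is a simple polygon in the plane (closed region: boundary together with interior), whose boundary (the walls) consists of finitely many line segments. A guard is a point of $\Gamma$; a guard $G$ visually covers $A\in\Gamma$ if the segment $GA$ lies entirely in $\Gamma$. A configuration of guards is a finite set $F$ of points of $\Gamma$; it visually covers $X\subseteq\Gamma$ if each point of $X$ is visually covered by some guard in $F$. *)

(* Defs.v *)
From Stdlib Require Import Reals List.
Open Scope R_scope.

Definition point : Type := (R * R)%type.

Definition seg_pt (a b : point) (t : R) : point :=
  (fst a + t * (fst b - fst a), snd a + t * (snd b - snd a)).

Definition on_seg (a b p : point) : Prop :=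
  exists t, 0 <= t <= 1 /\ p = seg_pt a b t.

Definition pnorm (p : point) : R := sqrt (fst p * fst p + snd p * snd p).

(* A polygon is given by its cyclic list of vertices v_0, ..., v_{n-1};
   vertex indices are taken modulo n. *)
Definition vtx (P : list point) (i : nat) : point :=
  nth (Nat.modulo i (length P)) P (0, 0).

Definition edge_pt (P : list point) (i : nat) (p : point) : Prop :=
  on_seg (vtx P i) (vtx P (S i)) p.

Definition simple_polygon (P : list point) : Prop :=
  (3 <= length P)%nat /\
  forall i j : nat, (i < length P)%nat -> (j < length P)%nat -> i <> j ->
    forall p, edge_pt P i p -> edge_pt P j p ->
      (j = Nat.modulo (S i) (length P) /\ p = vtx P j) \/
      (i = Nat.modulo (S j) (length P) /\ p = vtx P i).

Definition boundary (P : list point) (p : point) : Prop :=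
  exists i, (i < length P)%nat /\ edge_pt P i p.

Definition path_in (X : point -> Prop) (f : R -> point) : Prop :=
  continuity (fun s => fst (f s)) /\ continuity (fun s => snd (f s)) /\
  forall t, 0 <= t <= 1 -> X (f t).

(* p lies in the unbounded component of the complement of the boundary *)
Definition exterior (P : list point) (p : point) : Prop :=
  ~ boundary P p /\
  forall M : R, exists f : R -> point,
    path_in (fun q => ~ boundary P q) f /\ f 0 = p /\ M <= pnorm (f 1).

(* interior = bounded component(s) of the complement of the boundary *)
Definition interior (P : list point) (p : point) : Prop :=
  ~ boundary P p /\ ~ exterior P p.

Definition gallery (P : list point) (p : point) : Prop :=
  boundary P p \/ interior P p.

Definition covers (P : list point) (g a : point) : Prop :=
  forall t, 0 <= t <= 1 -> gallery P (seg_pt g a t).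

(* Main.v *)
Require Import Defs.
From Stdlib Require Import Reals List Lra Lia Psatz Classical.
Open Scope R_scope.

Lemma pt_eq : forall p q : point, fst p = fst q -> snd p = snd q -> p = q.
Proof. intros [a b] [c d]; simpl; intros; subst; reflexivity. Qed.

Lemma seg_pt_0 : forall a b, seg_pt a b 0 = a.
Proof. intros [a1 a2] b; unfold seg_pt; apply pt_eq; simpl; ring. Qed.
Lemma seg_pt_1 : forall a b, seg_pt a b 1 = b.
Proof. intros a [b1 b2]; unfold seg_pt; apply pt_eq; simpl; ring. Qed.
Lemma seg_pt_same : forall a t, seg_pt a a t = a.
Proof. intros [a1 a2] t; unfold seg_pt; apply pt_eq; simpl; ring. Qed.

Lemma c_const : forall c, continuity (fun _ => c).
Proof. intro; apply continuity_const; intros ? ?; reflexivity. Qed.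
Lemma c_id : continuity (fun x => x).
Proof. exact (derivable_continuous id derivable_id). Qed.
Lemma c_plus : forall f g, continuity f -> continuity g -> continuity (fun x => f x + g x).
Proof. intros; apply continuity_plus; auto. Qed.
Lemma c_minus : forall f g, continuity f -> continuity g -> continuity (fun x => f x - g x).
Proof. intros; apply continuity_minus; auto. Qed.
Lemma c_mult : forall f g, continuity f -> continuity g -> continuity (fun x => f x * g x).
Proof. intros; apply continuity_mult; auto. Qed.
Lemma c_abs : forall f, continuity f -> continuity (fun x => Rabs (f x)).
Proof. intros f H. apply (continuity_comp f Rabs H Rcontinuity_abs). Qed.
Lemma c_comp : forall f g, continuity f -> continuity g -> continuity (fun x => g (f x)).
Proof. intros f g Hf Hg. apply (continuity_comp f g Hf Hg). Qed.
Lemma c_div : forall f c, continuity f -> continuity (fun x => f x / c).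
Proof. intros. unfold Rdiv. apply c_mult; auto. apply c_const. Qed.

Definition rmin (x y : R) := (x + y - Rabs (x - y)) / 2.
Lemma rmin_Rmin : forall x y, rmin x y = Rmin x y.
Proof. intros; unfold rmin, Rmin; destruct (Rle_dec x y);
  [rewrite Rabs_left1 by lra | rewrite Rabs_right by lra]; field. Qed.
Lemma rmin_le_l : forall x y, rmin x y <= x.
Proof. intros; rewrite rmin_Rmin; apply Rmin_l. Qed.
Lemma rmin_le_r : forall x y, rmin x y <= y.
Proof. intros; rewrite rmin_Rmin; apply Rmin_r. Qed.
Lemma rmin_case : forall x y, rmin x y = x \/ rmin x y = y.
Proof. intros; rewrite rmin_Rmin; unfold Rmin; destruct (Rle_dec x y); auto. Qed.
Lemma rmin_glb : forall x y z, z <= x -> z <= y -> z <= rmin x y.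
Proof. intros; rewrite rmin_Rmin; apply Rmin_glb; auto. Qed.
Lemma c_rmin : forall f g, continuity f -> continuity g -> continuity (fun x => rmin (f x) (g x)).
Proof. intros. unfold rmin. apply c_div. apply c_minus. apply c_plus; auto.
  apply c_abs. apply c_minus; auto. Qed.

Ltac cont := repeat first
  [ apply c_rmin | apply c_minus | apply c_plus | apply c_mult | apply c_div
  | apply c_abs | apply c_id | apply c_const | assumption ].

Lemma ext_not_bnd : forall P p, exterior P p -> ~ boundary P p.
Proof. intros P p [H _]; exact H. Qed.

Lemma gallery_not_ext : forall P p, gallery P p -> ~ exterior P p.
Proof. intros P p [Hb|[_ Hi]] He; auto. apply (ext_not_bnd _ _ He Hb). Qed.

Lemma not_gallery_ext : forall P p, ~ gallery P p -> exterior P p.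
Proof. intros P p H. apply NNPP; intro He. apply H. right. split; auto.
  intro Hb; apply H; left; auto. Qed.

Lemma ext_connect : forall P f x y,
  path_in (fun q => ~ boundary P q) f -> f 0 = x -> f 1 = y ->
  exterior P y -> exterior P x.
Proof.
  intros P f x y [Hf1 [Hf2 Hf3]] H0 H1 [Hyb Hy].
  split. { rewrite <- H0. apply Hf3; lra. }
  intro M. destruct (Hy M) as [g [[Hg1 [Hg2 Hg3]] [Hg0 HgM]]].
  set (mn := fun s => rmin s (1/2)).
  set (mx := fun s => s + 1/2 - rmin s (1/2)).
  exists (fun s => (fst (f (2 * mn s)) + fst (g (2 * mx s - 1)) - fst y,
                    snd (f (2 * mn s)) + snd (g (2 * mx s - 1)) - snd y)).
  assert (Hmn : continuity mn) by (unfold mn; cont).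
  assert (Hmx : continuity mx) by (unfold mx; cont).
  assert (E1 : forall s, s <= 1/2 -> mn s = s /\ mx s = 1/2).
  { intros s Hs; unfold mn, mx; rewrite !rmin_Rmin; unfold Rmin.
    destruct (Rle_dec s (1/2)); split; lra. }
  assert (E2 : forall s, 1/2 <= s -> mn s = 1/2 /\ mx s = s).
  { intros s Hs; unfold mn, mx; rewrite !rmin_Rmin; unfold Rmin.
    destruct (Rle_dec s (1/2)); split; lra. }
  assert (Hval : forall s, 0 <= s <= 1 ->
     (fst (f (2 * mn s)) + fst (g (2 * mx s - 1)) - fst y,
      snd (f (2 * mn s)) + snd (g (2 * mx s - 1)) - snd y)
     = if Rle_dec s (1/2) then f (2*s) else g (2*s-1)).
  { intros s Hs. destruct (Rle_dec s (1/2)).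
    - destruct (E1 s r) as [-> ->]. replace (2*(1/2)-1) with 0 by field.
      rewrite Hg0. apply pt_eq; simpl; ring.
    - destruct (E2 s) as [-> ->]; [lra|]. replace (2*(1/2)) with 1 by field.
      rewrite H1. apply pt_eq; simpl; ring. }
  split; [split; [|split]|split].
  - apply c_minus; [apply c_plus|apply c_const].
    + apply (c_comp (fun s => 2 * mn s) (fun s => fst (f s))); cont.
    + apply (c_comp (fun s => 2 * mx s - 1) (fun s => fst (g s))); cont.
  - apply c_minus; [apply c_plus|apply c_const].
    + apply (c_comp (fun s => 2 * mn s) (fun s => snd (f s))); cont.
    + apply (c_comp (fun s => 2 * mx s - 1) (fun s => snd (g s))); cont.
  - intros t Ht. rewrite Hval by auto. destruct (Rle_dec t (1/2)).
    + apply Hf3; lra.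
    + apply Hg3; lra.
  - rewrite Hval by lra. destruct (Rle_dec 0 (1/2)); [|lra].
    rewrite Rmult_0_r; auto.
  - rewrite Hval by lra. destruct (Rle_dec 1 (1/2)); [lra|].
    replace (2*1-1) with 1 by ring. auto.
Qed.
Lemma seg_cont_fst : forall x y c k, continuity (fun t => fst (seg_pt x y (c + k * t))).
Proof. intros; unfold seg_pt; simpl; cont. Qed.
Lemma seg_cont_snd : forall x y c k, continuity (fun t => snd (seg_pt x y (c + k * t))).
Proof. intros; unfold seg_pt; simpl; cont. Qed.

Lemma seg_seg : forall g a s t, seg_pt g (seg_pt g a s) t = seg_pt g a (s * t).
Proof. intros; unfold seg_pt; apply pt_eq; simpl; ring. Qed.
Lemma seg_of_seg : forall g a s1 s2 t,
  seg_pt (seg_pt g a s1) (seg_pt g a s2) t = seg_pt g a (s1 + t * (s2 - s1)).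
Proof. intros; unfold seg_pt; apply pt_eq; simpl; ring. Qed.

Lemma ext_seg : forall P x y,
  (forall t, 0 <= t <= 1 -> ~ boundary P (seg_pt x y t)) ->
  exterior P y -> exterior P x.
Proof.
  intros P x y H Hy. apply (ext_connect P (fun t => seg_pt x y (0 + 1 * t)) x y); auto.
  - split; [|split].
    + apply seg_cont_fst. + apply seg_cont_snd.
    + intros t Ht; replace (0 + 1 * t) with t by ring; auto.
  - replace (0 + 1 * 0) with 0 by ring; apply seg_pt_0.
  - replace (0 + 1 * 1) with 1 by ring; apply seg_pt_1.
Qed.

Lemma covers_shrink : forall P g a s, 1 <= s -> covers P g (seg_pt g a s) -> covers P g a.
Proof.
  intros P g a s Hs H t Ht.
  replace (seg_pt g a t) with (seg_pt g (seg_pt g a s) (t / s)).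
  - apply H. split. apply Rmult_le_pos; [lra|]. left; apply Rinv_0_lt_compat; lra.
    apply (Rmult_le_reg_r s); [lra|]. unfold Rdiv; rewrite Rmult_assoc, Rinv_l by lra. lra.
  - rewrite seg_seg. f_equal. field. lra.
Qed.

Lemma notcov_contains : forall P g a tau s, exterior P (seg_pt g a tau) -> 0 < tau <= s ->
  ~ covers P g (seg_pt g a s).
Proof.
  intros P g a tau s He Hts H.
  apply (gallery_not_ext P (seg_pt g a tau)); auto.
  replace (seg_pt g a tau) with (seg_pt g (seg_pt g a s) (tau / s)).
  - apply H. split. apply Rmult_le_pos; [lra|]. left; apply Rinv_0_lt_compat; lra.
    apply (Rmult_le_reg_r s); [lra|]. unfold Rdiv; rewrite Rmult_assoc, Rinv_l by lra. lra.
  - rewrite seg_seg. f_equal. field. lra.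
Qed.

Lemma pnorm_fst : forall p, Rabs (fst p) <= pnorm p.
Proof. intros [x y]; unfold pnorm; simpl. rewrite <- sqrt_Rsqr_abs.
  apply sqrt_le_1_alt. unfold Rsqr. nra. Qed.
Lemma pnorm_snd : forall p, Rabs (snd p) <= pnorm p.
Proof. intros [x y]; unfold pnorm; simpl. rewrite <- sqrt_Rsqr_abs.
  apply sqrt_le_1_alt. unfold Rsqr. nra. Qed.

Lemma far_coord : forall gj dj M, dj <> 0 -> exists s, 1 <= s /\ M <= Rabs (gj + s * dj).
Proof.
  intros gj dj M Hd. assert (Ha : 0 < Rabs dj) by (apply Rabs_pos_lt; auto).
  exists (1 + (Rabs M + Rabs gj) / Rabs dj). split.
  - assert (0 <= (Rabs M + Rabs gj) / Rabs dj).
    { apply Rmult_le_pos. pose proof (Rabs_pos M); pose proof (Rabs_pos gj); lra.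
      left; apply Rinv_0_lt_compat; auto. } lra.
  - set (s := 1 + (Rabs M + Rabs gj) / Rabs dj).
    assert (Hs : s * Rabs dj = Rabs dj + Rabs M + Rabs gj) by (unfold s; field; lra).
    pose proof (Rabs_triang_inv (s * dj) (- gj)).
    replace (s * dj - - gj) with (gj + s * dj) in H by ring.
    rewrite Rabs_Ropp, Rabs_mult in H.
    assert (0 <= s) by (unfold s; pose proof (Rabs_pos M); pose proof (Rabs_pos gj);
      assert (0 <= (Rabs M + Rabs gj) / Rabs dj) by (apply Rmult_le_pos; [lra|left; apply Rinv_0_lt_compat; auto]); lra).
    rewrite (Rabs_right s) in H by lra.
    pose proof (Rle_abs M). lra.
Qed.

Lemma ray_lemma : forall P g a, ~ boundary P a -> ~ exterior P a -> g <> a ->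
  exists s, 1 <= s /\ boundary P (seg_pt g a s).
Proof.
  intros P g a Hb He Hga. apply NNPP; intro H. apply He. split; auto.
  intro M.
  assert (Hs : exists s, 1 <= s /\ M <= pnorm (seg_pt g a s)).
  { destruct (Req_dec (fst a - fst g) 0) as [E1|E1].
    - destruct (Req_dec (snd a - snd g) 0) as [E2|E2].
      + exfalso; apply Hga. apply pt_eq; lra.
      + destruct (far_coord (snd g) (snd a - snd g) M E2) as [s [Hs1 Hs2]].
        exists s; split; auto. eapply Rle_trans; [apply Hs2|].
        apply (pnorm_snd (seg_pt g a s)).
    - destruct (far_coord (fst g) (fst a - fst g) M E1) as [s [Hs1 Hs2]].
      exists s; split; auto. eapply Rle_trans; [apply Hs2|].
      apply (pnorm_fst (seg_pt g a s)). }
  destruct Hs as [s [Hs1 Hs2]].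
  exists (fun t => seg_pt g a (1 + (s - 1) * t)). split; [split; [|split]|split].
  - apply seg_cont_fst. - apply seg_cont_snd.
  - intros t Ht Hbt. apply H. exists (1 + (s - 1) * t). split; auto. nra.
  - replace (1 + (s - 1) * 0) with 1 by ring. apply seg_pt_1.
  - replace (1 + (s - 1) * 1) with s by ring. auto.
Qed.
Definition d2 (p q : point) : R := (fst p - fst q)^2 + (snd p - snd q)^2.

Lemma small_zero : forall x, 0 <= x -> (forall d, 0 < d -> x < d) -> x = 0.
Proof. intros x H0 H. destruct (Req_dec x 0); auto. specialize (H (x/2)). lra. Qed.

Lemma d2_zero : forall p q, d2 p q = 0 -> p = q.
Proof. intros [a b] [c d]; unfold d2; simpl; intro H.
  pose proof (pow2_ge_0 (a-c)); pose proof (pow2_ge_0 (b-d)).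
  assert (K1 : (a-c)^2 = 0) by lra. assert (K2 : (b-d)^2 = 0) by lra.
  replace ((a-c)^2) with ((a-c)*(a-c)) in K1 by ring; replace ((b-d)^2) with ((b-d)*(b-d)) in K2 by ring; apply Rmult_integral in K1; apply Rmult_integral in K2. apply pt_eq; simpl; destruct K1, K2; lra. Qed.

Lemma d2_nonneg : forall p q, 0 <= d2 p q.
Proof. intros; unfold d2; pose proof (pow2_ge_0 (fst p - fst q)); pose proof (pow2_ge_0 (snd p - snd q)); lra. Qed.

Lemma seg_closed : forall v w p,
  (forall d, 0 < d -> exists t, 0 <= t <= 1 /\ d2 (seg_pt v w t) p < d) -> on_seg v w p.
Proof.
  intros [v1 v2] [w1 w2] [p1 p2] H. unfold on_seg.
  set (e1 := w1 - v1). set (e2 := w2 - v2). set (N := e1^2 + e2^2).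
  destruct (Req_dec N 0) as [HN|HN].
  - assert (E1 : e1 = 0) by (unfold N in HN; nra).
    assert (E2 : e2 = 0) by (unfold N in HN; nra).
    exists 0. split; [lra|].
    apply eq_sym, d2_zero. apply small_zero. apply d2_nonneg.
    intros d Hd. destruct (H d Hd) as [t [Ht Hd2]].
    unfold d2, seg_pt in *; simpl in *. fold e1 e2 in Hd2 |- *. rewrite E1, E2 in *.
    replace (v1 + 0 * 0 - p1) with (v1 + t * 0 - p1) by ring.
    replace (v2 + 0 * 0 - p2) with (v2 + t * 0 - p2) by ring. auto.
  - assert (HNp : 0 < N) by (unfold N in *; pose proof (pow2_ge_0 e1); pose proof (pow2_ge_0 e2); lra).
    set (ts := ((p1 - v1) * e1 + (p2 - v2) * e2) / N).
    assert (Id : forall t, d2 (seg_pt (v1,v2) (w1,w2) t) (p1,p2)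
                 = d2 (seg_pt (v1,v2) (w1,w2) ts) (p1,p2) + (t - ts)*(t - ts) * N).
    { intro t. unfold d2, seg_pt, ts; simpl. fold e1 e2. unfold N. field. fold N. lra. }
    exists ts. split; [split|].
    + destruct (Rle_lt_dec 0 ts) as [|Hlt]; auto. exfalso.
      destruct (H (ts*ts * N)) as [t [Ht Hd2]]. apply Rmult_lt_0_compat; nra.
      rewrite Id in Hd2. pose proof (d2_nonneg (seg_pt (v1,v2) (w1,w2) ts) (p1,p2)).
      assert (ts * ts <= (t - ts)*(t - ts)) by nra. nra.
    + destruct (Rle_lt_dec ts 1) as [|Hlt]; auto. exfalso.
      destruct (H ((ts-1)*(ts-1) * N)) as [t [Ht Hd2]]. apply Rmult_lt_0_compat; nra.
      rewrite Id in Hd2. pose proof (d2_nonneg (seg_pt (v1,v2) (w1,w2) ts) (p1,p2)).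
      assert ((ts - 1) * (ts - 1) <= (t - ts)*(t - ts)) by nra. nra.
    + apply eq_sym, d2_zero. apply small_zero. apply d2_nonneg.
      intros d Hd. destruct (H d Hd) as [t [Ht Hd2]]. rewrite Id in Hd2.
      assert (0 <= (t - ts)*(t - ts) * N) by (apply Rmult_le_pos; [apply Rle_0_sqr|lra]). lra.
Qed.

Lemma finite_min : forall (Q : nat -> R -> Prop) n,
  (forall i, (i < n)%nat -> exists d, 0 < d /\ Q i d) ->
  (forall i d d', 0 < d' <= d -> Q i d -> Q i d') ->
  exists d, 0 < d /\ forall i, (i < n)%nat -> Q i d.
Proof.
  intros Q n. induction n as [|n IH]; intros H Hm.
  - exists 1; split; [lra|]; intros; lia.
  - destruct IH as [d1 [Hd1 H1]]. intros i Hi; apply H; lia. auto.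
    destruct (H n) as [d2' [Hd2 H2]]. lia.
    exists (Rmin d1 d2'). split. apply Rmin_pos; auto.
    intros i Hi. destruct (Nat.eq_dec i n).
    + subst. apply (Hm _ d2'); auto. split. apply Rmin_pos; auto. apply Rmin_r.
    + apply (Hm _ d1); auto. split. apply Rmin_pos; auto. apply Rmin_l. apply H1; lia.
Qed.

Lemma boundary_closed : forall P p,
  (forall d, 0 < d -> exists q, boundary P q /\ d2 q p < d) -> boundary P p.
Proof.
  intros P p H. apply NNPP; intro Hn.
  destruct (finite_min (fun i d => forall q, edge_pt P i q -> d <= d2 q p) (length P))
    as [d [Hd Hq]].
  - intros i Hi. apply NNPP; intro Hne. apply Hn. exists i; split; auto.
    unfold edge_pt. apply seg_closed. intros d Hd. apply NNPP; intro Hc.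
    apply Hne. exists d; split; auto. intros q [t [Ht ->]].
    destruct (Rle_lt_dec d (d2 (seg_pt (vtx P i) (vtx P (S i)) t) p)); auto.
    exfalso; apply Hc; exists t; split; auto.
  - intros i d d' Hd' Hq q Hq'. specialize (Hq q Hq'). lra.
  - destruct (H d Hd) as [q [[i [Hi Hiq]] Hdq]]. specialize (Hq i Hi q Hiq). lra.
Qed.

Lemma line_closed : forall P g a s,
  (forall e, 0 < e -> exists u, Rabs (u - s) < e /\ boundary P (seg_pt g a u)) ->
  boundary P (seg_pt g a s).
Proof.
  intros P g a s H. apply boundary_closed. intros d Hd.
  set (N := (fst a - fst g)*(fst a - fst g) + (snd a - snd g)*(snd a - snd g)).
  assert (HN : 0 <= N) by (unfold N; pose proof (Rle_0_sqr (fst a - fst g)); pose proof (Rle_0_sqr (snd a - snd g)); unfold Rsqr in *; lra).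
  set (e := Rmin 1 (d / (N + 1))).
  assert (He : 0 < e) by (apply Rmin_pos; [lra|apply Rdiv_lt_0_compat; lra]).
  destruct (H e He) as [u [Hu Hb]]. exists (seg_pt g a u). split; auto.
  assert (E : d2 (seg_pt g a u) (seg_pt g a s) = (u - s)*(u - s) * N).
  { unfold d2, seg_pt, N; simpl; ring. }
  rewrite E.
  assert (He1 : e <= 1) by apply Rmin_l.
  assert (He2 : e <= d / (N + 1)) by apply Rmin_r.
  assert (Hsq : (u - s)*(u - s) < e) by (apply Rabs_def2 in Hu; nra).
  assert (e * (N + 1) <= d).
  { apply (Rmult_le_compat_r (N+1)) in He2; [|lra].
    unfold Rdiv in He2; rewrite Rmult_assoc, Rinv_l in He2 by lra. lra. }
  nra.
Qed.
Lemma last_before : forall (Q : R -> Prop),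
  (forall s, (forall e, 0 < e -> exists u, Rabs (u - s) < e /\ Q u) -> Q s) ->
  forall lo x u0, lo <= u0 <= x -> Q u0 ->
  exists s, lo <= s <= x /\ Q s /\ forall u, s < u <= x -> ~ Q u.
Proof.
  intros Q Hc lo x u0 Hu0 Qu0.
  set (E := fun u => lo <= u <= x /\ Q u).
  destruct (completeness E) as [m [Hub Hlub]].
  - exists x. intros u [Hu _]. lra.
  - exists u0. split; auto.
  - assert (Hm1 : u0 <= m) by (apply Hub; split; auto).
    assert (Hm2 : m <= x) by (apply Hlub; intros u [Hu _]; lra).
    exists m. split; [lra|split].
    + apply Hc. intros e He. apply NNPP; intro Hn.
      assert (m <= m - e); [|lra].
      apply Hlub. intros u [Hu Qu]. destruct (Rle_lt_dec u (m - e)); auto.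
      exfalso. apply Hn. exists u. split; auto.
      assert (u <= m) by (apply Hub; split; auto).
      apply Rabs_def1; lra.
    + intros u Hu Qu. assert (u <= m) by (apply Hub; split; [lra|auto]). lra.
Qed.

Lemma last_bnd : forall P g a lo u0, lo <= u0 <= 1 -> boundary P (seg_pt g a u0) ->
  exists s, lo <= s <= 1 /\ boundary P (seg_pt g a s) /\
    forall u, s < u <= 1 -> ~ boundary P (seg_pt g a u).
Proof.
  intros P g a lo u0 H1 H2.
  apply (last_before (fun u => boundary P (seg_pt g a u))) with u0; auto.
  intros s Hs. apply line_closed. auto.
Qed.

Lemma first_bnd : forall P g a s0, 1 <= s0 -> boundary P (seg_pt g a s0) ->
  exists s, 1 <= s /\ boundary P (seg_pt g a s) /\
    forall u, 1 <= u < s -> ~ boundary P (seg_pt g a u).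
Proof.
  intros P g a s0 H1 H2.
  destruct (last_before (fun u => boundary P (seg_pt g a (2 - u)))) with (2 - s0) 1 (2 - s0)
    as [s [Hs [Qs Hn]]].
  - intros s Hs. apply line_closed. intros e He. destruct (Hs e He) as [u [Hu Qu]].
    exists (2 - u). split; auto. replace (2 - u - (2 - s)) with (- (u - s)) by ring.
    rewrite Rabs_Ropp; auto.
  - lra.
  - replace (2 - (2 - s0)) with s0 by ring; auto.
  - exists (2 - s). split; [lra|split; auto].
    intros u Hu Hb. apply (Hn (2 - u)). lra. replace (2 - (2 - u)) with u by ring; auto.
Qed.
Lemma conv_bound : forall wa wb wc x y z, 0 <= wa -> 0 <= wb -> 0 <= wc -> wa + wb + wc = 1 ->
  Rabs (wa * x + wb * y + wc * z) <= Rabs x + Rabs y + Rabs z.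
Proof.
  intros. eapply Rle_trans; [apply Rabs_triang|].
  eapply Rle_trans; [apply Rplus_le_compat_r; apply Rabs_triang|].
  rewrite !Rabs_mult. rewrite (Rabs_right wa), (Rabs_right wb), (Rabs_right wc) by lra.
  pose proof (Rabs_pos x); pose proof (Rabs_pos y); pose proof (Rabs_pos z).
  assert (wa * Rabs x <= Rabs x) by nra. assert (wb * Rabs y <= Rabs y) by nra.
  assert (wc * Rabs z <= Rabs z) by nra. lra.
Qed.

Lemma pnorm_le : forall p, pnorm p <= Rabs (fst p) + Rabs (snd p).
Proof.
  intros [x y]; unfold pnorm; simpl.
  rewrite <- (sqrt_Rsqr (Rabs x + Rabs y)) by (pose proof (Rabs_pos x); pose proof (Rabs_pos y); lra).
  apply sqrt_le_1_alt. unfold Rsqr.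
  destruct (Rcase_abs x); [rewrite (Rabs_left x) by lra|rewrite (Rabs_right x) by lra];
  (destruct (Rcase_abs y); [rewrite (Rabs_left y) by lra|rewrite (Rabs_right y) by lra]); nra.
Qed.

Lemma gallery_pt : forall P p q, gallery P p -> fst p = fst q -> snd p = snd q -> gallery P q.
Proof. intros P p q H H1 H2. replace q with p; auto. apply pt_eq; auto. Qed.

Lemma enclosure_degen : forall P A B C q beta gamma,
  (forall t, 0 <= t <= 1 -> gallery P (seg_pt A B t)) ->
  (forall t, 0 <= t <= 1 -> gallery P (seg_pt A C t)) ->
  (forall t, 0 <= t <= 1 -> gallery P (seg_pt B C t)) ->
  0 < beta -> 0 < gamma -> beta + gamma < 1 ->
  fst q = fst A + beta * (fst B - fst A) + gamma * (fst C - fst A) ->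
  snd q = snd A + beta * (snd B - snd A) + gamma * (snd C - snd A) ->
  (fst B - fst A) * (snd C - snd A) - (snd B - snd A) * (fst C - fst A) = 0 ->
  gallery P q.
Proof.
  intros P [a1 a2] [b1 b2] [c1 c2] q beta gamma HAB HAC HBC Hb Hg Hbg Hq1 Hq2 HD.
  simpl in *.
  set (N := (b1-a1)*(b1-a1) + (b2-a2)*(b2-a2)).
  set (dot := (c1-a1)*(b1-a1) + (c2-a2)*(b2-a2)).
  destruct (Req_dec N 0) as [HN|HN].
  - assert (E1 : b1 = a1 /\ b2 = a2).
    { pose proof (Rle_0_sqr (b1-a1)); pose proof (Rle_0_sqr (b2-a2)). unfold Rsqr in *.
      assert (X1 : (b1-a1)*(b1-a1) = 0) by (unfold N in HN; lra).
      assert (X2 : (b2-a2)*(b2-a2) = 0) by (unfold N in HN; lra).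
      apply Rmult_integral in X1; apply Rmult_integral in X2. destruct X1, X2; lra. }
    destruct E1 as [E1 E2].
    apply (gallery_pt P (seg_pt (a1,a2) (c1,c2) gamma)). apply HAC; lra.
    unfold seg_pt; simpl; rewrite Hq1; subst; ring.
    unfold seg_pt; simpl; rewrite Hq2; subst; ring.
  - set (k := dot / N).
    assert (I1 : (c1-a1)*N = dot*(b1-a1)).
    { assert (X : (c1-a1)*N - dot*(b1-a1) = -(b2-a2)*((b1 - a1) * (c2 - a2) - (b2 - a2) * (c1 - a1)))
        by (unfold N, dot; ring). rewrite HD in X. lra. }
    assert (I2 : (c2-a2)*N = dot*(b2-a2)).
    { assert (X : (c2-a2)*N - dot*(b2-a2) = (b1-a1)*((b1 - a1) * (c2 - a2) - (b2 - a2) * (c1 - a1)))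
        by (unfold N, dot; ring). rewrite HD in X. lra. }
    assert (K1 : c1 - a1 = k * (b1 - a1)).
    { apply (Rmult_eq_reg_r N); auto. rewrite I1. unfold k. field. auto. }
    assert (K2 : c2 - a2 = k * (b2 - a2)).
    { apply (Rmult_eq_reg_r N); auto. rewrite I2. unfold k. field. auto. }
    set (mu := beta + gamma * k).
    assert (Q1 : fst q = a1 + mu * (b1 - a1)) by (rewrite Hq1, K1; unfold mu; ring).
    assert (Q2 : snd q = a2 + mu * (b2 - a2)) by (rewrite Hq2, K2; unfold mu; ring).
    destruct (Rle_lt_dec mu 1) as [Hm1|Hm1]; [destruct (Rle_lt_dec 0 mu) as [Hm0|Hm0]|].
    + apply (gallery_pt P (seg_pt (a1,a2) (b1,b2) mu)). apply HAB; lra.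
      unfold seg_pt; simpl; rewrite Q1; ring. unfold seg_pt; simpl; rewrite Q2; ring.
    + assert (Hk : k < 0) by (unfold mu in Hm0; nra).
      apply (gallery_pt P (seg_pt (b1,b2) (c1,c2) ((1 - mu)/(1 - k)))).
      * apply HBC. split. apply Rmult_le_pos; [lra|left; apply Rinv_0_lt_compat; lra].
        apply (Rmult_le_reg_r (1 - k)); [lra|]. unfold Rdiv. rewrite Rmult_assoc, Rinv_l by lra.
        unfold mu. nra.
      * unfold seg_pt; simpl; rewrite Q1.
        replace (c1 - b1) with ((c1 - a1) - (b1 - a1)) by ring. rewrite K1. field. lra.
      * unfold seg_pt; simpl; rewrite Q2.
        replace (c2 - b2) with ((c2 - a2) - (b2 - a2)) by ring. rewrite K2. field. lra.
    + assert (Hk : 1 < k) by (unfold mu in Hm1; nra).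
      apply (gallery_pt P (seg_pt (a1,a2) (c1,c2) (mu / k))).
      * apply HAC. split. apply Rmult_le_pos; [lra|left; apply Rinv_0_lt_compat; lra].
        apply (Rmult_le_reg_r k); [lra|]. unfold Rdiv. rewrite Rmult_assoc, Rinv_l by lra.
        unfold mu. nra.
      * unfold seg_pt; simpl; rewrite Q1, K1. field. lra.
      * unfold seg_pt; simpl; rewrite Q2, K2. field. lra.
Qed.
Lemma enclosure : forall P A B C q beta gamma,
  (forall t, 0 <= t <= 1 -> gallery P (seg_pt A B t)) ->
  (forall t, 0 <= t <= 1 -> gallery P (seg_pt A C t)) ->
  (forall t, 0 <= t <= 1 -> gallery P (seg_pt B C t)) ->
  0 < beta -> 0 < gamma -> beta + gamma < 1 ->
  fst q = fst A + beta * (fst B - fst A) + gamma * (fst C - fst A) ->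
  snd q = snd A + beta * (snd B - snd A) + gamma * (snd C - snd A) ->
  ~ exterior P q.
Proof.
  intros P A B C q beta gamma HAB HAC HBC Hb Hg Hbg Hq1 Hq2.
  destruct (Req_dec ((fst B - fst A) * (snd C - snd A) - (snd B - snd A) * (fst C - fst A)) 0) as [HD|HD].
  { apply gallery_not_ext. apply (enclosure_degen P A B C q beta gamma); auto. }
  destruct A as [a1 a2], B as [b1 b2], C as [c1 c2]; simpl in *.
  set (D := (b1 - a1) * (c2 - a2) - (b2 - a2) * (c1 - a1)) in HD.
  intro Hext. pose proof Hext as [Hqb Hq].
  set (K := 1 + Rabs a1 + Rabs b1 + Rabs c1 + Rabs a2 + Rabs b2 + Rabs c2).
  destruct (Hq K) as [f [[Hf1 [Hf2 Hf3]] [Hf0 HfK]]].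
  set (lB := fun p1 p2 => ((p1-a1)*(c2-a2) - (p2-a2)*(c1-a1))/D).
  set (lC := fun p1 p2 => ((b1-a1)*(p2-a2) - (b2-a2)*(p1-a1))/D).
  assert (Id1 : forall p1 p2, p1 = a1 + lB p1 p2 * (b1-a1) + lC p1 p2 * (c1 - a1)).
  { intros; unfold lB, lC, D in *; field; auto. }
  assert (Id2 : forall p1 p2, p2 = a2 + lB p1 p2 * (b2-a2) + lC p1 p2 * (c2 - a2)).
  { intros; unfold lB, lC, D in *; field; auto. }
  set (wB := fun t => lB (fst (f t)) (snd (f t))).
  set (wC := fun t => lC (fst (f t)) (snd (f t))).
  set (phi := fun t => rmin (1 - wB t - wC t) (rmin (wB t) (wC t))).
  assert (Hc : continuity phi).
  { unfold phi, wB, wC, lB, lC. cont. }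
  assert (HB0 : wB 0 = beta).
  { unfold wB, lB; rewrite Hf0, Hq1, Hq2. unfold D in *; field; auto. }
  assert (HC0 : wC 0 = gamma).
  { unfold wC, lC; rewrite Hf0, Hq1, Hq2. unfold D in *; field; auto. }
  assert (Hp0 : 0 < phi 0).
  { unfold phi; rewrite HB0, HC0.
    destruct (rmin_case (1 - beta - gamma) (rmin beta gamma)) as [E2|E2]; rewrite E2; try lra;
    destruct (rmin_case beta gamma) as [E1|E1]; rewrite E1; lra. }
  assert (Hp1 : phi 1 < 0).
  { destruct (Rlt_le_dec (phi 1) 0) as [|Hge]; auto. exfalso.
    unfold phi in Hge.
    pose proof (rmin_le_l (1 - wB 1 - wC 1) (rmin (wB 1) (wC 1))).
    pose proof (rmin_le_r (1 - wB 1 - wC 1) (rmin (wB 1) (wC 1))).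
    pose proof (rmin_le_l (wB 1) (wC 1)). pose proof (rmin_le_r (wB 1) (wC 1)).
    assert (X1 : fst (f 1) = (1 - wB 1 - wC 1) * a1 + wB 1 * b1 + wC 1 * c1).
    { unfold wB, wC. rewrite (Id1 (fst (f 1)) (snd (f 1))) at 1. ring. }
    assert (X2 : snd (f 1) = (1 - wB 1 - wC 1) * a2 + wB 1 * b2 + wC 1 * c2).
    { unfold wB, wC. rewrite (Id2 (fst (f 1)) (snd (f 1))) at 1. ring. }
    pose proof (conv_bound (1 - wB 1 - wC 1) (wB 1) (wC 1) a1 b1 c1 ltac:(lra) ltac:(lra) ltac:(lra) ltac:(ring)).
    pose proof (conv_bound (1 - wB 1 - wC 1) (wB 1) (wC 1) a2 b2 c2 ltac:(lra) ltac:(lra) ltac:(lra) ltac:(ring)).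
    rewrite <- X1 in *. rewrite <- X2 in *. pose proof (pnorm_le (f 1)). unfold K in HfK. lra. }
  destruct (IVT (fun t => - phi t) 0 1) as [t0 [Ht0 Hz]].
  { apply continuity_opp in Hc. exact Hc. } lra. lra. lra.
  assert (Hz0 : phi t0 = 0) by lra.
  assert (Hnb : ~ boundary P (f t0)) by (apply Hf3; auto).
  assert (Hgal : gallery P (f t0)).
  { unfold phi in Hz0.
    pose proof (rmin_le_l (1 - wB t0 - wC t0) (rmin (wB t0) (wC t0))).
    pose proof (rmin_le_r (1 - wB t0 - wC t0) (rmin (wB t0) (wC t0))).
    pose proof (rmin_le_l (wB t0) (wC t0)). pose proof (rmin_le_r (wB t0) (wC t0)).
    pose proof (Id1 (fst (f t0)) (snd (f t0))) as J1.
    pose proof (Id2 (fst (f t0)) (snd (f t0))) as J2.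
    change (lB (fst (f t0)) (snd (f t0))) with (wB t0) in J1, J2.
    change (lC (fst (f t0)) (snd (f t0))) with (wC t0) in J1, J2.
    assert (N0 : 0 <= 1 - wB t0 - wC t0 /\ 0 <= wB t0 /\ 0 <= wC t0) by lra.
    destruct (rmin_case (1 - wB t0 - wC t0) (rmin (wB t0) (wC t0))) as [E|E]; rewrite E in Hz0.
    - apply (gallery_pt P (seg_pt (b1,b2) (c1,c2) (wC t0))). apply HBC; lra.
      unfold seg_pt; simpl. rewrite J1; replace (wB t0) with (1 - wC t0) by lra; ring.
      unfold seg_pt; simpl. rewrite J2; replace (wB t0) with (1 - wC t0) by lra; ring.
    - destruct (rmin_case (wB t0) (wC t0)) as [E'|E']; rewrite E' in Hz0.
      + apply (gallery_pt P (seg_pt (a1,a2) (c1,c2) (wC t0))). apply HAC; lra.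
        unfold seg_pt; simpl. rewrite J1, Hz0; ring. unfold seg_pt; simpl. rewrite J2, Hz0; ring.
      + apply (gallery_pt P (seg_pt (a1,a2) (b1,b2) (wB t0))). apply HAB; lra.
        unfold seg_pt; simpl. rewrite J1, Hz0; ring. unfold seg_pt; simpl. rewrite J2, Hz0; ring. }
  apply (gallery_not_ext P (f t0) Hgal).
  apply (ext_connect P (fun s => f (t0 + (- t0) * s)) (f t0) q); auto.
  - split; [|split].
    + apply (c_comp (fun s => t0 + - t0 * s) (fun s => fst (f s))); cont.
    + apply (c_comp (fun s => t0 + - t0 * s) (fun s => snd (f s))); cont.
    + intros t Ht. apply Hf3. nra.
  - f_equal; ring.
  - replace (t0 + - t0 * 1) with 0 by ring. auto.
Qed.
Lemma covers_self : forall P a, gallery P a -> covers P a a.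
Proof. intros P a H t Ht. rewrite seg_pt_same. auto. Qed.

Lemma ext_on_seg : forall P g a, gallery P g -> gallery P a -> ~ covers P g a ->
  exists tau, 0 < tau < 1 /\ exterior P (seg_pt g a tau).
Proof.
  intros P g a Hg Ha Hn. apply NNPP; intro H. apply Hn. intros t Ht.
  apply NNPP; intro Hng. apply H. exists t. split.
  - split.
    + destruct (Req_dec t 0); [subst; rewrite seg_pt_0 in Hng; contradiction|lra].
    + destruct (Req_dec t 1); [subst; rewrite seg_pt_1 in Hng; contradiction|lra].
  - apply not_gallery_ext; auto.
Qed.

Lemma two_guard : forall P a g1 g2,
  gallery P g1 -> gallery P g2 -> ~ boundary P a -> ~ exterior P a ->
  ~ covers P g1 a -> ~ covers P g2 a -> g1 <> a ->
  (forall b, boundary P b -> covers P g1 b \/ covers P g2 b) -> False.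
Proof.
  intros P a g1 g2 Hg1 Hg2 Hab Hae Hc1 Hc2 Hga Hcov.
  assert (Hagal : gallery P a) by (right; split; auto).
  destruct (ext_on_seg P g1 a Hg1 Hagal Hc1) as [t1 [Ht1 He1]].
  assert (Hex : exists u, t1 <= u <= 1 /\ boundary P (seg_pt g1 a u)).
  { apply NNPP; intro H. apply Hae. rewrite <- (seg_pt_1 g1 a).
    apply (ext_seg P _ (seg_pt g1 a t1)); auto.
    intros t Ht Hb. rewrite seg_of_seg in Hb. apply H.
    eexists; split; [|exact Hb]. nra. }
  destruct Hex as [u0 [Hu0 Hbu0]].
  destruct (last_bnd P g1 a t1 u0 Hu0 Hbu0) as [sc [Hsc [Hbc Hnc]]].
  destruct (ray_lemma P g1 a Hab Hae Hga) as [s0 [Hs0 Hbs0]].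
  destruct (first_bnd P g1 a s0 Hs0 Hbs0) as [sb [Hsb [Hbb Hnb]]].
  assert (Hsc1 : sc < 1).
  { destruct (Req_dec sc 1); [|lra]. subst. rewrite seg_pt_1 in Hbc. contradiction. }
  assert (Hsb1 : 1 < sb).
  { destruct (Req_dec sb 1); [|lra]. subst. rewrite seg_pt_1 in Hbb. contradiction. }
  assert (Hmid : forall u, sc < u < sb -> ~ boundary P (seg_pt g1 a u)).
  { intros u Hu. destruct (Rle_lt_dec u 1). apply Hnc; lra. apply Hnb; lra. }
  assert (Hgal : forall u, sc <= u <= sb -> gallery P (seg_pt g1 a u)).
  { intros u Hu.
    destruct (Req_dec u sc); [subst; left; auto|].
    destruct (Req_dec u sb); [subst; left; auto|].
    assert (Hnbu : ~ boundary P (seg_pt g1 a u)) by (apply Hmid; lra).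
    right. split; auto. intro Heu. apply Hae. rewrite <- (seg_pt_1 g1 a).
    apply (ext_seg P _ (seg_pt g1 a u)); auto.
    intros t Ht. rewrite seg_of_seg.
    destruct (Req_dec t 0). subst. replace (1 + 0 * (u - 1)) with 1 by ring.
    rewrite seg_pt_1; auto.
    apply Hmid. split; nra. }
  assert (Hcc : covers P g2 (seg_pt g1 a sc)).
  { destruct (Hcov _ Hbc) as [H|H]; auto. exfalso.
    apply (notcov_contains P g1 a t1 sc He1); auto. lra. }
  assert (Hcb : covers P g2 (seg_pt g1 a sb)).
  { destruct (Hcov _ Hbb) as [H|H]; auto. exfalso.
    apply Hc1. apply (covers_shrink P g1 a sb); auto. }
  destruct (ext_on_seg P g2 a Hg2 Hagal Hc2) as [t2 [Ht2 He2]].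
  set (lam := (1 - sc) / (sb - sc)).
  assert (Hl : 0 < lam < 1).
  { unfold lam; split. apply Rdiv_lt_0_compat; lra.
    apply (Rmult_lt_reg_r (sb - sc)); [lra|]. unfold Rdiv.
    rewrite Rmult_assoc, Rinv_l by lra. lra. }
  apply (enclosure P g2 (seg_pt g1 a sc) (seg_pt g1 a sb) (seg_pt g2 a t2)
    (t2 * (1 - lam)) (t2 * lam)); auto.
  - intros t Ht. rewrite seg_of_seg. apply Hgal. nra.
  - nra.
  - nra.
  - nra.
  - unfold seg_pt, lam; simpl. field. lra.
  - unfold seg_pt, lam; simpl. field. lra.
Qed.

Theorem proposition3 :
  forall P : list point, simple_polygon P ->
  forall F : list point, (1 <= length F <= 2)%nat ->
  (forall g, In g F -> gallery P g) ->
  (forall a, boundary P a -> exists g, In g F /\ covers P g a) ->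
  forall a, gallery P a -> exists g, In g F /\ covers P g a.
Proof.
  intros P _ F HF Hgal Hbnd a Ha.
  apply NNPP; intro Hn.
  assert (Hnc : forall g, In g F -> ~ covers P g a).
  { intros g Hg Hc; apply Hn; exists g; auto. }
  destruct (classic (boundary P a)) as [Hb|Hb].
  { apply Hn; apply Hbnd; auto. }
  assert (Hae : ~ exterior P a) by (apply gallery_not_ext; auto).
  assert (Hne : forall g, In g F -> g <> a).
  { intros g Hg Heq. subst. apply (Hnc a Hg). apply covers_self; auto. }
  destruct F as [|g1 [|g2 [|g3 F]]]; simpl in HF; try lia.
  - destruct (ray_lemma P g1 a Hb Hae (Hne g1 (or_introl eq_refl))) as [s [Hs Hbs]].
    destruct (Hbnd _ Hbs) as [g [[<-|[]] Hc]].
    apply (Hnc g1 (or_introl eq_refl)). apply (covers_shrink P g1 a s); auto.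
  - apply (two_guard P a g1 g2); auto.
    + apply Hgal; simpl; auto.
    + apply Hgal; simpl; auto.
    + apply Hnc; simpl; auto.
    + apply Hnc; simpl; auto.
    + apply Hne; simpl; auto.
    + intros b Hbb. destruct (Hbnd b Hbb) as [g [[<-|[<-|[]]] Hc]]; auto.
Qed.
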